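(* Let $V$ be a complex vector space with a quadratic form $f$, and let $V=V_0\supset V_1\supset V_2\supset\cdots$ be a descending chain of subspaces with $\dim_{\mathbb{C}}(V/V_i)<\infty$ for all $i\ge0$ and $\bigcap_{i\ge0}V_i=(0)$. For each $i$, let $Cl(V_i)$ denote the subalgebra of the Clifford algebra $Cl(V,f)$ generated by $1$ and $V_i$ (i.e. $Cl(V_i,f|_{V_i})$). Then $$\bigcap_{i\ge0}Cl(V_i)=\mathbb{C}\cdot1.$$
   Context: A quadratic form on $V$ is a map $f:V\to\mathbb{C}$ with $f(\alpha v)=\alpha^2f(v)$ such that $f(u,v)=f(u+v)-f(u)-f(v)$ is bilinear. The Clifford algebra $Cl(V,f)$ is the unital associative algebra generated by $V$ and $1$ subject to $v^2=f(v)\cdot1$ for $v\in V$. *)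

(* Defs.v *)
From HB Require Import structures.
From mathcomp Require Import all_boot all_order all_algebra.
From mathcomp Require Import reals complex.
Set Implicit Arguments. Unset Strict Implicit. Unset Printing Implicit Defensive.
Import Order.TTheory GRing.Theory Num.Theory.
Local Open Scope ring_scope.

Section Clifford.
Variable R : realType.
Local Notation C := (complex R).

Definition polar_form (V : lmodType C) (f : V -> C) (u v : V) : C :=
  f (u + v) - f u - f v.

Definition quadratic_form (V : lmodType C) (f : V -> C) : Prop :=
  (forall (a : C) (v : V), f (a *: v) = a ^+ 2 * f v) /\
  (forall (a : C) (u u' v : V),
      polar_form f (a *: u + u') v = a * polar_form f u v + polar_form f u' v) /\
  (forall (a : C) (u v v' : V),
      polar_form f u (a *: v + v') = a * polar_form f u v + polar_form f u v').

Definition is_clifford_algebra (V : lmodType C) (f : V -> C)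
    (A : algType C) (iota : {linear V -> A}) : Prop :=
  (forall v : V, iota v * iota v = (f v)%:A) /\
  (forall (B : algType C) (j : {linear V -> B}),
     (forall v : V, j v * j v = (f v)%:A) ->
     exists phi : {lrmorphism A -> B},
       (forall v : V, phi (iota v) = j v) /\
       (forall psi : {lrmorphism A -> B},
          (forall v : V, psi (iota v) = j v) -> forall a : A, psi a = phi a)).

Inductive gen_subalg (A : algType C) (S : A -> Prop) : A -> Prop :=
  | gen_in    : forall x, S x -> gen_subalg S x
  | gen_one   : gen_subalg S 1
  | gen_add   : forall x y, gen_subalg S x -> gen_subalg S y -> gen_subalg S (x + y)
  | gen_scale : forall (a : C) x, gen_subalg S x -> gen_subalg S (a *: x)
  | gen_mul   : forall x y, gen_subalg S x -> gen_subalg S y -> gen_subalg S (x * y).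

Definition is_subspace (V : lmodType C) (W : V -> Prop) : Prop :=
  W 0 /\ forall (a : C) (u v : V), W u -> W v -> W (a *: u + v).

Definition finite_codim (V : lmodType C) (W : V -> Prop) : Prop :=
  exists (n : nat) (b : 'I_n -> V),
    forall v : V, exists c : 'I_n -> C, W (v - \sum_(k < n) c k *: b k).

End Clifford.

(* Main.v *)
Require Import Defs.
From HB Require Import structures.
From mathcomp Require Import all_boot all_order all_algebra.
From mathcomp Require Import reals complex.
From Stdlib Require Import Classical ClassicalEpsilon.
From mathcomp Require Import ring.
Set Implicit Arguments. Unset Strict Implicit. Unset Printing Implicit Defensive.
Import Order.TTheory GRing.Theory Num.Theory.
Local Open Scope ring_scope.

Section Sub.
Variable R : realType.
Local Notation C := (complex R).
Variable V : lmodType C.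

Lemma sub0 (U : V -> Prop) : is_subspace U -> U 0.
Proof. by case. Qed.
Lemma subD {U : V -> Prop} {u v} : is_subspace U -> U u -> U v -> U (u + v).
Proof. by case=> _ h hu hv; have := h 1 u v hu hv; rewrite scale1r. Qed.
Lemma subZ {U : V -> Prop} {a u} : is_subspace U -> U u -> U (a *: u).
Proof. by case=> h0 h hu; have := h a u 0 hu h0; rewrite addr0. Qed.
Lemma subN {U : V -> Prop} {u} : is_subspace U -> U u -> U (- u).
Proof. by move=> hU hu; rewrite -scaleN1r; apply: subZ. Qed.
Lemma subB {U : V -> Prop} {u v} : is_subspace U -> U u -> U v -> U (u - v).
Proof. by move=> hU hu hv; apply: subD => //; apply: subN. Qed.

Fixpoint lspan (l : seq V) (v : V) : Prop :=
  match l with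
  | [::] => v = 0
  | w :: l' => exists c : C, lspan l' (v - c *: w)
  end.

Lemma lspan_sub l : is_subspace (lspan l).
Proof.
elim: l => [|w l [IH0 IH]] /=; first by split=> // a u v -> ->; rewrite scaler0 addr0.
split; first by exists 0; rewrite scale0r subr0.
move=> a u v [c1 h1] [c2 h2]; exists (a * c1 + c2).
have := IH a _ _ h1 h2.
congr lspan; rewrite scalerDl -scalerA scalerBr; rewrite !addrA.
by rewrite -!addrA; congr (_ + _); rewrite addrC -addrA; congr (_ + _); rewrite opprD addrC.
Qed.

Lemma lspan_cons w l v : lspan l v -> lspan (w :: l) v.
Proof. by move=> h; exists 0; rewrite scale0r subr0. Qed.

Lemma lspan_head w l : lspan (w :: l) w.
Proof. by exists 1; rewrite scale1r subrr; apply: sub0 (lspan_sub l). Qed.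

Lemma functional (U : V -> Prop) : is_subspace U -> forall n (b : 'I_n -> V),
  (forall v, exists c : 'I_n -> C, U (v - \sum_(k < n) c k *: b k)) ->
  forall e, ~ U e ->
  exists lam : V -> C, (forall a u v, lam (a *: u + v) = a * lam u + lam v) /\
    (forall u, U u -> lam u = 0) /\ lam e = 1.
Proof.
move=> hU; elim=> [|n IH] b hspan e he.
  by case: (hspan e) => c; rewrite big_ord0 subr0.
case: (classic (exists c : 'I_n.+1 -> C, U (\sum_(k < n.+1) c k *: b k) /\ exists k, c k != 0)).
  case=> c [hc [k0 hk0]].
  apply: (IH (fun k => b (lift k0 k))) => // v.
  case: (hspan v) => d hd.
  pose t := d k0 / c k0.
  exists (fun k => d (lift k0 k) - t * c (lift k0 k)).
  have -> : \sum_(k < n) (d (lift k0 k) - t * c (lift k0 k)) *: b (lift k0 k) =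
      \sum_(k < n.+1) (d k - t * c k) *: b k.
    rewrite (bigD1_ord k0) //= /t divfK // subrr scale0r add0r.
    by apply: eq_bigr.
  have -> : \sum_(k < n.+1) (d k - t * c k) *: b k =
      \sum_(k < n.+1) d k *: b k - t *: \sum_(k < n.+1) c k *: b k.
    rewrite scaler_sumr -sumrB; apply: eq_bigr => k _.
    by rewrite scalerBl scalerA.
  rewrite opprB addrCA; apply: (subD hU) => //.
  exact: (subZ hU).
move=> hind.
have hind' : forall c : 'I_n.+1 -> C, U (\sum_(k < n.+1) c k *: b k) -> forall k, c k = 0.
  move=> c hc k; apply/eqP; apply/negPn/negP => hk; apply: hind; exists c; split => //.
  by exists k.
pose coef v := proj1_sig (constructive_indefinite_description _ (hspan v)).
have hcoef v : U (v - \sum_(k < n.+1) coef v k *: b k).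
  exact: (proj2_sig (constructive_indefinite_description _ (hspan v))).
have coefU u : U u -> forall k, coef u k = 0.
  move=> hu; apply: hind'.
  have -> : \sum_(k < n.+1) coef u k *: b k = u - (u - \sum_(k < n.+1) coef u k *: b k).
    by rewrite opprB addrC subrK.
  by apply: (subB hU).
have coefL a u v j : coef (a *: u + v) j = a * coef u j + coef v j.
  apply/eqP; rewrite -subr_eq0; apply/eqP.
  apply: (hind' (fun k => coef (a *: u + v) k - (a * coef u k + coef v k)) _ j).
  have -> : \sum_(k < n.+1) (coef (a *: u + v) k - (a * coef u k + coef v k)) *: b k =
     a *: (u - \sum_(k < n.+1) coef u k *: b k) + (v - \sum_(k < n.+1) coef v k *: b k)
     - (a *: u + v - \sum_(k < n.+1) coef (a *: u + v) k *: b k).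
    rewrite scalerBr scaler_sumr.
    have -> : \sum_(k < n.+1) (coef (a *: u + v) k - (a * coef u k + coef v k)) *: b k =
      \sum_(k < n.+1) coef (a *: u + v) k *: b k - (\sum_(k < n.+1) a *: (coef u k *: b k)
        + \sum_(k < n.+1) coef v k *: b k).
      rewrite -big_split -sumrB /=; apply: eq_bigr => k _.
      by rewrite scalerBl scalerDl scalerA.
    by rewrite opprB (addrACA (a *: u)) -opprD [RHS]addrC subrKA.
  by apply: (subB hU); [apply: (subD hU); [apply: (subZ hU)|] |].
have [k0 hk0] : exists k, coef e k != 0.
  apply: NNPP => hno; apply: he.
  have -> : e = e - \sum_(k < n.+1) coef e k *: b k.
    rewrite big1 ?subr0 // => k _.
    have : coef e k = 0 by apply: NNPP => h; apply: hno; exists k; apply/eqP.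
    by move=> ->; rewrite scale0r.
  exact: hcoef.
exists (fun v => coef v k0 / coef e k0); split; last split.
- by move=> a u v; rewrite coefL mulrDl mulrA.
- by move=> u hu; rewrite coefU // mul0r.
- by rewrite divff.
Qed.

End Sub.

Section Gen.
Variable R : realType.
Local Notation C := (complex R).
Variable V : lmodType C.
Variable A : algType C.
Variable iota : {linear V -> A}.

Definition gens (P : V -> Prop) : A -> Prop := fun y => exists2 v, P v & y = iota v.

Lemma gen_mono (S T : A -> Prop) x :
  (forall y, S y -> gen_subalg T y) -> gen_subalg S x -> gen_subalg T x.
Proof.
move=> hST; elim=> {x} [x /hST //| |x y _ hx _ hy|a x _ hx|x y _ hx _ hy].
- exact: gen_one.
- exact: gen_add.
- exact: gen_scale.
- exact: gen_mul.
Qed.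

Lemma gen_scalar (S : A -> Prop) (c : C) : gen_subalg S (c%:A).
Proof. by apply: gen_scale; apply: gen_one. Qed.

Lemma gen_opp (S : A -> Prop) x : gen_subalg S x -> gen_subalg S (- x).
Proof. by move=> h; rewrite -scaleN1r; apply: gen_scale. Qed.

Lemma gen_nil x : gen_subalg (gens (fun v => List.In v [::])) x -> exists c : C, x = c%:A.
Proof.
elim=> {x} [x [v []]| |x y _ [c ->] _ [d ->]|a x _ [c ->]|x y _ [c ->] _ [d ->]].
- by exists 1; rewrite scale1r.
- by exists (c + d); rewrite scalerDl.
- by exists (a * c); rewrite scalerA.
- by exists (c * d); rewrite mulr_algl scalerA.
Qed.

Lemma lspan_gen l v : lspan l v -> gen_subalg (gens (fun u => List.In u l)) (iota v).
Proof.
elim: l v => [|w l IH] v /=.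
  by move=> ->; rewrite linear0 -(scale0r (1 : A)); apply: gen_scalar.
case=> c /IH h.
have -> : iota v = c *: iota w + iota (v - c *: w) by rewrite -linearP addrC subrK.
apply: gen_add.
  by apply: gen_scale; apply: gen_in; exists w => //; left.
by apply: (gen_mono _ h) => y [u hu ->]; apply: gen_in; exists u => //; right.
Qed.

Lemma gen_list (P : V -> Prop) x : gen_subalg (gens P) x ->
  exists l, gen_subalg (gens (fun u => List.In u l)) x.
Proof.
have mono l1 l2 y : (forall u, List.In u l1 -> List.In u l2) ->
    gen_subalg (gens (fun u => List.In u l1)) y -> gen_subalg (gens (fun u => List.In u l2)) y.
  move=> h; apply: gen_mono => z [u hu ->]; apply: gen_in; exists u => //; exact: h.
elim=> {x} [x [v _ ->]| |x y _ [l1 h1] _ [l2 h2]|a x _ [l h]|x y _ [l1 h1] _ [l2 h2]].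
- by exists [:: v]; apply: gen_in; exists v => //; left.
- by exists [::]; apply: gen_one.
- exists (l1 ++ l2); apply: gen_add.
    by apply: (mono _ _ _ _ h1) => u hu; apply: List.in_or_app; left.
  by apply: (mono _ _ _ _ h2) => u hu; apply: List.in_or_app; right.
- by exists l; apply: gen_scale.
- exists (l1 ++ l2); apply: gen_mul.
    by apply: (mono _ _ _ _ h1) => u hu; apply: List.in_or_app; left.
  by apply: (mono _ _ _ _ h2) => u hu; apply: List.in_or_app; right.
Qed.

Variable f : V -> C.
Hypothesis hsq : forall v, iota v * iota v = (f v)%:A.

Lemma ac6 (M : zmodType) (x1 x2 x3 x4 x5 x6 : M) :
  x1 + (x2 + x3) + (x4 + (x5 + x6)) = x1 + x2 + x6 + (x3 + x4 + x5).
Proof.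
by rewrite !addrA (addrAC (x1 + x2) x6) (addrAC (x1 + x2 + x3) x6) (addrAC (x1 + x2 + x3 + x4) x6).
Qed.

Lemma anticomm u w : iota u * iota w + iota w * iota u = (polar_form f u w)%:A.
Proof.
have := hsq (u + w); rewrite linearD /= mulrDl !mulrDr !hsq.
rewrite /polar_form => h; rewrite !scalerBl -h.
by rewrite addrAC -!addrA addrC !addrA addrK addrAC addrK.
Qed.

Lemma comm_e (P : V -> Prop) e a : gen_subalg (gens P) a ->
  exists a1 a2, [/\ gen_subalg (gens P) a1, gen_subalg (gens P) a2 &
    a * iota e = a1 + iota e * a2].
Proof.
elim=> {a} [x [w hw ->]| |x y _ [x1 [x2 [h1 h2 hx]]] _ [y1 [y2 [k1 k2 hy]]]
   |c x _ [x1 [x2 [h1 h2 hx]]]|x y gx [x1 [x2 [h1 h2 hx]]] gy [y1 [y2 [k1 k2 hy]]]].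
- exists ((polar_form f w e)%:A), (- iota w); split.
  + exact: gen_scalar.
  + by apply: gen_opp; apply: gen_in; exists w.
  + by rewrite -anticomm mulrN addrK.
- by exists 0, 1; split; [rewrite -(scale0r (1:A)); apply: gen_scalar|apply: gen_one|rewrite mul1r mulr1 add0r].
- exists (x1 + y1), (x2 + y2); split; [exact: gen_add|exact: gen_add|].
  by rewrite mulrDl hx hy mulrDr addrACA.
- exists (c *: x1), (c *: x2); split; [exact: gen_scale|exact: gen_scale|].
  by rewrite -scalerAl hx -scalerAr scalerDr.
- exists (x * y1 + x1 * y2), (x2 * y2); split.
  + by apply: gen_add; apply: gen_mul.
  + exact: gen_mul.
  + by rewrite -mulrA hy mulrDr mulrA hx mulrDl -!mulrA addrA.
Qed.

Lemma span_e (P : V -> Prop) e x :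
  gen_subalg (gens (fun u => e = u \/ P u)) x ->
  exists a b, [/\ gen_subalg (gens P) a, gen_subalg (gens P) b & x = a + iota e * b].
Proof.
elim=> {x} [x [w [<-|hw] ->]| |x y _ [x1 [x2 [h1 h2 ->]]] _ [y1 [y2 [k1 k2 ->]]]
   |c x _ [x1 [x2 [h1 h2 ->]]]|x y _ [a [b [ha hb ->]]] _ [a' [b' [ha' hb' ->]]]].
- exists 0, 1; split; [rewrite -(scale0r (1:A)); apply: gen_scalar|apply: gen_one|by rewrite mulr1 add0r].
- exists (iota w), 0; split; [by apply: gen_in; exists w|rewrite -(scale0r (1:A)); apply: gen_scalar|by rewrite mulr0 addr0].
- exists 1, 0; split; [apply: gen_one|rewrite -(scale0r (1:A)); apply: gen_scalar|by rewrite mulr0 addr0].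
- exists (x1 + y1), (x2 + y2); split; [exact: gen_add|exact: gen_add|].
  by rewrite mulrDr addrACA.
- exists (c *: x1), (c *: x2); split; [exact: gen_scale|exact: gen_scale|].
  by rewrite scalerDr scalerAr.
- have [a1 [a2 [h1 h2 ea]]] := comm_e e ha.
  have [b1 [b2 [k1 k2 eb]]] := comm_e e hb.
  exists (a * a' + a1 * b' + f e *: (b2 * b')), (a2 * b' + b * a' + b1 * b'); split.
  + by apply: gen_add; [apply: gen_add; apply: gen_mul|apply: gen_scale; apply: gen_mul].
  + by apply: gen_add; [apply: gen_add|]; apply: gen_mul.
  + have e1 : a * (iota e * b') = a1 * b' + iota e * (a2 * b') by rewrite mulrA ea mulrDl mulrA.
    have e2 : iota e * b * (iota e * b') = iota e * (b1 * b') + f e *: (b2 * b').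
      by rewrite -!mulrA (mulrA b) eb mulrDl mulrDr !mulrA hsq mulr_algl -scalerAl.
    rewrite mulrDl !mulrDr e1 e2 -(mulrA _ b a').
    exact: ac6.
Qed.

End Gen.

Section Rep.
Variable R : realType.
Local Notation C := (complex R).
Variable A : algType C.

Definition B := 'M[A]_2.
HB.instance Definition _ := GRing.NzRing.on B.
Definition scB (a : C) (M : B) : B := map_mx (fun x => a *: x) M.
Lemma scB_A a b v : scB a (scB b v) = scB (a * b) v.
Proof. by apply/matrixP=> i j; rewrite !mxE scalerA. Qed.
Lemma scB_1 : left_id 1 scB.
Proof. by move=> v; apply/matrixP=> i j; rewrite !mxE scale1r. Qed.
Lemma scB_Dr : right_distributive scB +%R.
Proof. by move=> a u v; apply/matrixP=> i j; rewrite !mxE scalerDr. Qed.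
Lemma scB_Dl v : {morph scB^~ v: a b / a + b}.
Proof. by move=> a b; apply/matrixP=> i j; rewrite !mxE scalerDl. Qed.
HB.instance Definition _ := GRing.Zmodule_isLmodule.Build C B scB_A scB_1 scB_Dr scB_Dl.
Lemma scB_Al (a : C) (u v : B) : a *: (u * v) = (a *: u) * v.
Proof. apply/matrixP=> i j; rewrite !mxE scaler_sumr; apply: eq_bigr => k _.
by rewrite !mxE scalerAl. Qed.
HB.instance Definition _ := GRing.Lmodule_isLalgebra.Build C B scB_Al.
Lemma scB_Ar (a : C) (u v : B) : a *: (u * v) = u * (a *: v).
Proof. apply/matrixP=> i j; rewrite !mxE scaler_sumr; apply: eq_bigr => k _.
by rewrite !mxE scalerAr. Qed.
HB.instance Definition _ := GRing.Lalgebra_isAlgebra.Build C B scB_Ar.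

Lemma BscE (a : C) (M : B) i j : (a *: M) i j = a *: M i j.
Proof. by rewrite mxE. Qed.
Lemma BmulE (M N : B) i j : (M * N) i j = M i ord0 * N ord0 j + M i ord_max * N ord_max j.
Proof.
rewrite !mxE big_ord_recl big_ord1; congr (_ + _ * _); congr (_ _ _); exact: val_inj.
Qed.
Lemma BaddE (M N : B) i j : (M + N) i j = M i j + N i j.
Proof. by rewrite mxE. Qed.
Lemma BoneE i j : (1 : B) i j = (i == j)%:R.
Proof. by rewrite mxE. Qed.

End Rep.

Lemma ord2_cases (i : 'I_2) : i = ord0 \/ i = ord_max.
Proof.
case: i => [[|[|//]] ?]; [left|right]; exact: val_inj.
Qed.

Section Lmat.
Variable R : realType.
Local Notation C := (complex R).
Variable V : lmodType C.
Variable A : algType C.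
Variable iota : {linear V -> A}.
Variable f : V -> C.
Variable lam : V -> C.
Variable e : V.
Hypothesis hq : quadratic_form f.
Hypothesis hlam : forall a u v, lam (a *: u + v) = a * lam u + lam v.
Hypothesis hsq : forall v, iota v * iota v = (f v)%:A.

Definition hv v := v - lam v *: e.
Definition sv v := polar_form f e (hv v) + lam v * f e.
Definition Lmat v : B A := \matrix_(i < 2, j < 2)
  if i == ord0 then (if j == ord0 then iota (hv v) else (sv v)%:A)
  else (if j == ord0 then (lam v)%:A else - iota (hv v)).

Lemma hv_lin a u v : hv (a *: u + v) = a *: hv u + hv v.
Proof. by rewrite /hv hlam scalerDl scalerBr opprD addrACA scalerA. Qed.

Lemma sv_lin a u v : sv (a *: u + v) = a * sv u + sv v.
Proof.
rewrite /sv hv_lin hlam (proj2 (proj2 hq)); ring.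
Qed.

Lemma Lmat_lin : GRing.linear_for *:%R Lmat.
Proof.
move=> a u v; apply/matrixP => i j; rewrite !mxE.
case: ifP => _; case: ifP => _.
- by rewrite hv_lin linearP.
- by rewrite sv_lin scalerDl scalerA.
- by rewrite hlam scalerDl scalerA.
- by rewrite hv_lin linearP opprD scalerN.
Qed.

Definition LmatL : {linear V -> B A} :=
  HB.pack Lmat (GRing.isLinear.Build C V (B A) *:%R Lmat Lmat_lin).
Lemma LmatLE v : LmatL v = Lmat v. Proof. by []. Qed.

Lemma f0 : f 0 = 0.
Proof. by have := proj1 hq 0 0; rewrite scale0r expr0n /= mul0r. Qed.

Lemma f_decomp v : f v = f (hv v) + sv v * lam v.
Proof.
have hv_eq : v = lam v *: e + hv v by rewrite /hv addrC subrK.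
have hpol : polar_form f (lam v *: e) (hv v) = lam v * polar_form f e (hv v).
  have := (proj1 (proj2 hq)) (lam v) e 0 (hv v); rewrite addr0 => ->.
  by rewrite /polar_form add0r f0 subr0 subrr addr0.
have hfv : f v = polar_form f (lam v *: e) (hv v) + f (lam v *: e) + f (hv v).
  by rewrite /polar_form -hv_eq; ring.
rewrite hfv hpol (proj1 hq) /sv.
ring.
Qed.

Lemma Lmat_sq v : Lmat v * Lmat v = (f v)%:A.
Proof.
apply/matrixP => i j; rewrite BmulE BscE BoneE.
have h10 : (ord_max == ord0 :> 'I_2) = false by [].
case: (ord2_cases i) => ->; case: (ord2_cases j) => ->; rewrite !mxE /= ?h10 ?eqxx /=.
- by rewrite hsq mulr_algl scalerA -scalerDl -f_decomp.
- by rewrite mulr_algr mulr_algl scalerN subrr scaler0.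
- by rewrite mulr_algr mulr_algl scalerN subrr scaler0.
- by rewrite mulrNN hsq mulr_algl scalerA -scalerDl addrC mulrC -f_decomp.
Qed.

End Lmat.

Section Sep.
Variable R : realType.
Local Notation C := (complex R).
Variable V : lmodType C.
Variable A : algType C.
Variable iota : {linear V -> A}.
Variable f : V -> C.
Variable lam : V -> C.
Variable e : V.
Hypothesis hq : quadratic_form f.
Hypothesis hcl : is_clifford_algebra f iota.
Hypothesis hlam : forall a u v, lam (a *: u + v) = a * lam u + lam v.
Hypothesis hlame : lam e = 1.

Lemma sep (P Q : V -> Prop) x a b :
  (forall v, P v -> lam v = 0) -> (forall v, Q v -> lam v = 0) ->
  gen_subalg (gens iota P) x -> gen_subalg (gens iota Q) a -> gen_subalg (gens iota Q) b ->
  x = a + iota e * b -> b = 0.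
Proof.
move=> hP hQ hx ha hb hxab.
have hsq := proj1 hcl.
have [phi [hphi _]] := (proj2 hcl) (B A) (LmatL iota e hq hlam) (Lmat_sq lam e hq hsq).
have h10 : (ord_max == ord0 :> 'I_2) = false by [].
have triv (S : V -> Prop) y : (forall v, S v -> lam v = 0) -> gen_subalg (gens iota S) y ->
    phi y ord0 ord0 = y /\ phi y ord_max ord0 = 0.
  move=> hS; elim=> {y} [y [v hSv ->]| |y z _ [h1 h2] _ [k1 k2]|c y _ [h1 h2]|y z _ [h1 h2] _ [k1 k2]].
  - by rewrite hphi LmatLE !mxE /= /hv (hS v hSv) !scale0r subr0.
  - by rewrite rmorph1 !BoneE.
  - by rewrite raddfD !BaddE h1 h2 k1 k2 addr0.
  - by rewrite linearZ /= !BscE h1 h2 scaler0.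
  - by rewrite rmorphM !BmulE h1 h2 k1 k2 !(mulr0, mul0r, addr0).
have [_ hx0] := triv P x hP hx.
have [_ ha0] := triv Q a hQ ha.
have [hb0 hb1] := triv Q b hQ hb.
have he1 : phi (iota e) ord_max ord0 = 1 by rewrite hphi LmatLE !mxE /= hlame scale1r.
move: hx0; rewrite hxab rmorphD rmorphM BaddE BmulE ha0 hb0 hb1 he1.
by rewrite add0r mulr0 addr0 mul1r.
Qed.

End Sep.

Lemma lspan_in (R : realType) (V : lmodType R[i]) (l : seq V) u : List.In u l -> lspan l u.
Proof.
elim: l => [//|w l IH] /= [<-|hu]; first exact: lspan_head.
exact/lspan_cons/IH.
Qed.

Lemma stab (R : realType) (V : lmodType R[i]) (Vs : nat -> V -> Prop) :
  (forall i, is_subspace (Vs i)) -> (forall i v, Vs i.+1 v -> Vs i v) ->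
  (forall v, (forall i, Vs i v) -> v = 0) ->
  forall l, exists j, forall v, lspan l v -> Vs j v -> v = 0.
Proof.
move=> hs hmono h0.
have mono i j v : (i <= j)%N -> Vs j v -> Vs i v.
  elim: j => [|j IH]; first by rewrite leqn0 => /eqP ->.
  rewrite leq_eqVlt => /orP [/eqP -> //|hlt] hv.
  by apply: IH; [rewrite -ltnS | exact: hmono].
elim => [|w l [j0 IH]]; first by exists 0%N => v /= ->.
apply: NNPP => hno.
have hall : forall j, exists t, [/\ Vs (maxn j j0) t, lspan l (t - w) & t != 0].
  move=> j; apply: NNPP => hnt; apply: hno; exists (maxn j j0) => v [c hc] hv.
  apply: NNPP => hv0.
  case: (eqVneq c 0) => hc0.
    apply: hv0; apply: IH; first by move: hc; rewrite hc0 scale0r subr0.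
    by apply: (mono _ (maxn j j0)) => //; rewrite leq_maxr.
  apply: hnt; exists (c^-1 *: v); split.
  - exact: (subZ (hs _)).
  - have -> : c^-1 *: v - w = c^-1 *: (v - c *: w) by rewrite scalerBr scalerA mulVf // scale1r.
    exact: (subZ (lspan_sub l)).
  - by rewrite scaler_eq0 invr_eq0 negb_or hc0; apply/eqP.
have [t0 [ht0 hl0 hnz0]] := hall 0%N.
rewrite max0n in ht0.
move/eqP: hnz0; apply; apply: h0 => i.
have [t [ht hl _]] := hall i.
have htj0 : Vs j0 t by apply: (mono _ (maxn i j0)) => //; rewrite leq_maxr.
have -> : t0 = t.
  apply/eqP; rewrite eq_sym -subr_eq0; apply/eqP; apply: IH.
    have -> : t - t0 = (t - w) - (t0 - w) by rewrite opprB subrKA.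
    exact: (subB (lspan_sub l)).
  exact: (subB (hs _)).
by apply: (mono _ (maxn i j0)) => //; rewrite leq_maxl.
Qed.

Theorem lemma3 (R : realType) (V : lmodType (complex R)) (f : V -> complex R)
    (A : algType (complex R)) (iota : {linear V -> A})
    (Vs : nat -> V -> Prop) :
  quadratic_form f ->
  is_clifford_algebra f iota ->
  (forall i, is_subspace (Vs i)) ->
  (forall v, Vs 0%N v) ->
  (forall i v, Vs i.+1 v -> Vs i v) ->
  (forall i, finite_codim (Vs i)) ->
  (forall v, (forall i, Vs i v) -> v = 0) ->
  forall x : A,
    (forall i, gen_subalg (fun y => exists2 v, Vs i v & y = iota v) x) <->
    (exists c : complex R, x = c%:A).
Proof.
move=> hq hcl hsub hV0 hmono hcod h0 x; split; last first.
  by case=> c -> i; apply: gen_scalar.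
move=> hx.
have hsq := proj1 hcl.
have [l hl] := @gen_list _ _ _ iota _ x (hx 0%N).
have [j hj] := stab hsub hmono h0 l.
move: (hx j) hl hj; clear hx.
elim: l x => [|w l IH] x hxj hxl hind.
  exact: gen_nil hxl.
case: (classic (exists s, lspan l s /\ Vs j (w - s))).
  case=> s [hs hws].
  have ews : w = s.
    apply/eqP; rewrite -subr_eq0; apply/eqP; apply: hind => //.
    by exists 1; rewrite scale1r addrAC subrr add0r; exact: (subN (lspan_sub l)).
  apply: (IH x hxj) => [|v hv hvj]; last by apply: hind => //; apply: lspan_cons.
  apply: (gen_mono _ hxl) => y [u hu ->]; case: hu => [<-|hu].
    by rewrite ews; apply: lspan_gen.
  by apply: gen_in; exists u.
move=> hnot.
pose U := fun v => exists s, lspan l s /\ Vs j (v - s).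
have hU : is_subspace U.
  split; first by exists 0; split; [exact: (sub0 (lspan_sub l))|rewrite subr0; exact: (sub0 (hsub j))].
  move=> a u v [s1 [h1 k1]] [s2 [h2 k2]]; exists (a *: s1 + s2); split.
    by case: (lspan_sub l) => _; apply.
  have -> : a *: u + v - (a *: s1 + s2) = a *: (u - s1) + (v - s2).
    by rewrite scalerBr opprD addrACA.
  by case: (hsub j) => _; apply.
have [n [b hb]] := hcod j.
have [lam [hlam [hlamU hlame]]] : exists lam : V -> complex R,
    (forall a u v, lam (a *: u + v) = a * lam u + lam v) /\
    (forall u, U u -> lam u = 0) /\ lam w = 1.
  apply: (functional hU (b := b)) => // v.
  have [c hc] := hb v; exists c; exists 0; split; first exact: (sub0 (lspan_sub l)).
  by rewrite subr0.
have [a [b' [ha hb' hxe]]] := span_e hsq hxl.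
have b0 : b' = 0.
  apply: (sep hq hcl hlam hlame (P := Vs j) (Q := fun u => List.In u l) _ _ hxj ha hb' hxe).
    by move=> v hv; apply: hlamU; exists 0; split; [exact: (sub0 (lspan_sub l))|rewrite subr0].
  move=> v hv; apply: hlamU; exists v; split; first exact: lspan_in.
  by rewrite subrr; exact: (sub0 (hsub j)).
move: hxj; rewrite hxe b0 mulr0 addr0 => hxj.
apply: (IH a hxj ha) => v hv hvj; apply: hind => //; exact: lspan_cons.
Qed.
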